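(* Fix $s\in\mathfrak{S}$ and the objects in the context. Let $\widetilde p$ denote the joint distribution of $(\widetilde U^{1:N},\widetilde X^{1:N},\widetilde Y^{1:N},\widetilde Z^{1:N}(s))$ produced by the block construction described in the context, and let $q_{U^{1:N}X^{1:N}Y^{1:N}Z^{1:N}(s)}\triangleq\prod_{i=1}^N q_{UXYZ(s)}$. Then $$\mathbb{D}\big(q_{U^{1:N}X^{1:N}Y^{1:N}Z^{1:N}(s)}\,\big\|\,\widetilde p_{U^{1:N}X^{1:N}Y^{1:N}Z^{1:N}(s)}\big)\leq 2LK\delta_K.$$
   Context: Let $q_{UX}$ be a pmf on $\{0,1\}^2$, and $p_{YZ(s)|X}$ a channel with finite output alphabets; set $q_{UXYZ(s)}=q_{UX}p_{YZ(s)|X}$. Let $K$ be a power of two, $L\in\mathbb{N}$, $N=KL$, $G_K=\begin{bmatrix}1&0\\1&1\end{bmatrix}^{\otimes\log_2 K}$ over $\mathrm{GF}(2)$ (so $G_K^{-1}=G_K$). For $(U^{1:K},X^{1:K})\sim\prod_{i=1}^K q_{UX}$ let $A^{1:K}=U^{1:K}G_K$, $V^{1:K}=X^{1:K}G_K$. Let $\delta_K=2^{-K^\beta}$ with $\beta\in(0,1/2)$, $\mathcal{V}_U=\{i: H(A^i|A^{1:i-1})>1-\delta_K\}$, $\mathcal{V}_{X|U}=\{i: H(V^i|V^{1:i-1}U^{1:K})>1-\delta_K\}$. Construction of one block: there are $L$ mutually independent sub-blocks $l=1,\dots,L$. In each sub-block, $\widetilde A^{1:K}$ is generated as follows: the bits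 $\widetilde A^{1:K}[\mathcal{V}_U]$ are set to a uniformly distributed string (of length $|\mathcal{V}_U|$, independent across sub-blocks and of all other randomness), and for $j\notin\mathcal{V}_U$, in increasing order of $j$, $\widetilde A^j$ is drawn according to $q_{A^j|A^{1:j-1}}(\cdot|\widetilde A^{1:j-1})$; then $\widetilde U^{1:K}=\widetilde A^{1:K}G_K$. Next, $\widetilde V^{1:K}$ is drawn successively: for $j\in\mathcal{V}_{X|U}$, $\widetilde V^j$ is a uniform bit, and for $j\notin\mathcal{V}_{X|U}$, $\widetilde V^j\sim q_{V^j|V^{1:j-1}U^{1:K}}(\cdot|\widetilde V^{1:j-1},\widetilde U^{1:K})$; set $\widetilde X^{1:K}=\widetilde V^{1:K}G_K$, and let $(\widetilde Y^{1:K},\widetilde Z^{1:K}(s))$ be the output of $K$ independent uses of $p_{YZ(s)|X}$ with input $\widetilde X^{1:K}$. The length-$N$ sequences $\widetilde U^{1:N},\widetilde X^{1:N},\widetilde Y^{1:N},\widetilde Z^{1:N}(s)$ are the concatenations over the $L$ sub-blocks. $\mathbb{D}$ denotes Kullback–Leibler divergence. *)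

(* Defs.v *)
From HB Require Import structures.
From mathcomp Require Import all_boot all_order all_algebra.
From mathcomp Require Import all_classical all_reals all_analysis.
Set Implicit Arguments.
Unset Strict Implicit.
Unset Printing Implicit Defensive.
Import Order.TTheory GRing.Theory Num.Theory.
Local Open Scope ring_scope.

Section PolarDefs.
Variable R : realType.

Definition log2 (x : R) : R := ln x / ln 2.

Definition prob (T : finType) (P : T -> R) (E : pred T) : R :=
  \sum_(w | E w) P w.

(* conditional entropy H(f | g) (bits) under pmf P, convention 0 log 0 = 0 *)
Definition condEnt (T B C : finType) (P : T -> R) (f : T -> B) (g : T -> C) : R :=
  - \sum_(b : B) \sum_(c : C)
      (prob P (fun w => (f w == b) && (g w == c)) *
       log2 (prob P (fun w => (f w == b) && (g w == c)) /
             prob P (fun w => g w == c))).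

(* conditional pmf P(f = b | g = c); uniform on B if P(g = c) = 0
   (arbitrary convention for conditioning on null events) *)
Definition condProb (T B C : finType) (P : T -> R) (f : T -> B) (g : T -> C)
    (b : B) (c : C) : R :=
  let pc := prob P (fun w => g w == c) in
  if pc == 0 then (#|B|%:R)^-1
  else prob P (fun w => (f w == b) && (g w == c)) / pc.

Definition KL (T : finType) (q p : T -> R) : \bar R :=
  if [exists w, (0 < q w) && (p w == 0)] then +oo%E
  else (\sum_(w : T) q w * log2 (q w / p w))%:E.

End PolarDefs.

Lemma polar_dim_eq (n : nat) : (2 ^ n + 2 ^ n = 2 ^ n.+1)%N.
Proof. by rewrite expnS mul2n addnn. Qed.

(* G_{2^n} = [[1,0],[1,1]]^{(x) n} over GF(2), via F (x) G_{2^(n-1)} *)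
Fixpoint polarG (n : nat) : 'M['F_2]_(2 ^ n) :=
  match n return 'M['F_2]_(2 ^ n) with
  | 0 => 1%:M
  | n'.+1 => castmx (polar_dim_eq n', polar_dim_eq n')
               (block_mx (polarG n') 0 (polarG n') (polarG n'))
  end.

(* prefix a^{1:i} (0-based indices < i), other positions padded by 0 *)
Definition pref (K : nat) (i : nat) (a : 'rV['F_2]_K) : {ffun 'I_K -> 'F_2} :=
  [ffun k : 'I_K => if (k < i)%N then a 0 k else 0].

Definition blk (K : nat) (Y Z : finType) : finType :=
  ('rV['F_2]_K * 'rV['F_2]_K * {ffun 'I_K -> Y} * {ffun 'I_K -> Z})%type.

Definition bU K Y Z (w : blk K Y Z) := w.1.1.1.
Definition bX K Y Z (w : blk K Y Z) := w.1.1.2.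
Definition bY K Y Z (w : blk K Y Z) := w.1.2.
Definition bZ K Y Z (w : blk K Y Z) := w.2.

Section Construction.
Variable R : realType.
Variables (Y Z : finType).
Variable qUX : 'F_2 * 'F_2 -> R.
Variable W : 'F_2 -> Y * Z -> R.
Variable n : nat.
Variable beta : R.

Let K := (2 ^ n)%N.
Let G := polarG n.

Definition deltaK : R := 2 `^ (- ((K%:R) `^ beta)).

Definition qK (w : blk K Y Z) : R :=
  \prod_(i < K) (qUX (bU w 0 i, bX w 0 i) * W (bX w 0 i) (bY w i, bZ w i)).

Definition HA (i : 'I_K) : R :=
  condEnt qK (fun w => (bU w *m G) 0 i) (fun w => pref i (bU w *m G)).
Definition HV (i : 'I_K) : R :=
  condEnt qK (fun w => (bX w *m G) 0 i)
             (fun w => (pref i (bX w *m G), bU w)).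

Definition VU : pred 'I_K := fun i => 1 - deltaK < HA i.
Definition VXU : pred 'I_K := fun i => 1 - deltaK < HV i.

Definition condA (j : 'I_K) (b : 'F_2) (a : 'rV['F_2]_K) : R :=
  condProb qK (fun w => (bU w *m G) 0 j) (fun w => pref j (bU w *m G))
           b (pref j a).
Definition condV (j : 'I_K) (b : 'F_2) (v u : 'rV['F_2]_K) : R :=
  condProb qK (fun w => (bX w *m G) 0 j)
           (fun w => (pref j (bX w *m G), bU w)) b (pref j v, u).

Definition ptA (a : 'rV['F_2]_K) : R :=
  \prod_(j < K) (if VU j then 2^-1 else condA j (a 0 j) a).
Definition ptV (v u : 'rV['F_2]_K) : R :=
  \prod_(j < K) (if VXU j then 2^-1 else condV j (v 0 j) v u).

Definition ptK (w : blk K Y Z) : R :=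
  \sum_(a : 'rV['F_2]_K) \sum_(v : 'rV['F_2]_K)
     (if (a *m G == bU w) && (v *m G == bX w) then
        ptA a * ptV v (a *m G) *
        \prod_(i < K) W (bX w 0 i) (bY w i, bZ w i)
      else 0).

(* length-N = K*L sequences, stored as the concatenation of L sub-blocks *)
Definition qN (L : nat) (w : {ffun 'I_L -> blk K Y Z}) : R :=
  \prod_(l < L) qK (w l).
Definition ptN (L : nat) (w : {ffun 'I_L -> blk K Y Z}) : R :=
  \prod_(l < L) ptK (w l).

End Construction.

(* Main.v *)
Require Import Defs.
From HB Require Import structures.
From mathcomp Require Import all_boot all_order all_algebra.
From mathcomp Require Import all_classical all_reals all_analysis.
From mathcomp Require Import ring lra.
Import Order.TTheory GRing.Theory Num.Theory.
Local Open Scope ring_scope.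
Set Implicit Arguments. Unset Strict Implicit. Unset Printing Implicit Defensive.

Lemma castmx_mul m m' (e : m = m') (A B : 'M['F_2]_m) : castmx (e,e) A *m castmx (e,e) B = castmx (e,e) (A*m B).
Proof. by case: m' / e. Qed.
Lemma castmx_1 m m' (e : m = m') : castmx (e,e) (1%:M : 'M['F_2]_m) = 1%:M.
Proof. by case: m' / e. Qed.
Lemma F2_add (x : 'F_2) : x + x = 0.
Proof. by apply: addrr_pchar2; apply: pchar_Fp. Qed.
Lemma polarG_inv n : polarG n *m polarG n = 1%:M.
Proof.
elim: n => [|n IH] /=; first by rewrite mul1mx.
rewrite castmx_mul mulmx_block IH !mulmx0 !mul0mx !addr0 add0r.
have -> : (1%:M + 1%:M : 'M['F_2]_(2^n)) = 0.
  by apply/matrixP => i j; rewrite !mxE F2_add.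
by rewrite -scalar_mx_block castmx_1.
Qed.

Section Gen.
Variable R : realType.

Lemma sum_pair (A B : finType) (F : A * B -> R) :
  \sum_w F w = \sum_a \sum_b F (a, b).
Proof. by rewrite pair_bigA; apply: eq_bigr => -[]. Qed.

Lemma sum_ffun_prod (I T : finType) (F : I -> T -> R) :
  \sum_(f : {ffun I -> T}) \prod_i F i (f i) = \prod_i \sum_t F i t.
Proof. by rewrite bigA_distr_bigA. Qed.

Lemma row_ffun_sum (T : finType) k (F : 'rV[T]_k -> R) :
  \sum_(r : 'rV[T]_k) F r = \sum_(f : {ffun 'I_k -> T}) F (\row_i f i).
Proof.
apply: (reindex (fun f : {ffun 'I_k -> T} => \row_i f i)).
exists (fun r : 'rV[T]_k => [ffun i => r 0 i]) => [f _|r _].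
  by apply/ffunP => i; rewrite ffunE mxE.
by apply/matrixP => i j; rewrite mxE ffunE (ord1 i).
Qed.

Lemma sum2_ffun (I T1 T2 : finType) (F : I -> T1 -> T2 -> R) :
  \sum_(f : {ffun I -> T1}) \sum_(g : {ffun I -> T2}) \prod_i F i (f i) (g i)
  = \prod_i \sum_t1 \sum_t2 F i t1 t2.
Proof.
under [RHS]eq_bigr do rewrite pair_bigA.
rewrite -sum_ffun_prod pair_bigA /=.
rewrite (reindex (fun h : {ffun I -> T1 * T2} =>
   ([ffun i => (h i).1], [ffun i => (h i).2]))) /=.
  by apply: eq_bigr => h _; apply: eq_bigr => i _; rewrite !ffunE.
exists (fun p : {ffun I -> T1} * {ffun I -> T2} => [ffun i => (p.1 i, p.2 i)]).
  by move=> h _; apply/ffunP => i; rewrite !ffunE /=; case: (h i).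
by move=> [f g] _; rewrite /=; congr (_, _); apply/ffunP => i; rewrite !ffunE.
Qed.

Lemma sum2_row (T1 T2 : finType) k (F : 'I_k -> T1 -> T2 -> R) :
  \sum_(u : 'rV[T1]_k) \sum_(x : 'rV[T2]_k) \prod_i F i (u 0 i) (x 0 i)
  = \prod_i \sum_t1 \sum_t2 F i t1 t2.
Proof.
rewrite -sum2_ffun row_ffun_sum; apply: eq_bigr => f _.
rewrite row_ffun_sum; apply: eq_bigr => g _.
by apply: eq_bigr => i _; rewrite !mxE.
Qed.

Lemma sum_if (I : finType) (c : bool) (F : I -> R) :
  \sum_i (if c then F i else 0) = if c then \sum_i F i else 0.
Proof. by case: c => //; rewrite big1. Qed.

Lemma ln_prod (I : finType) (F : I -> R) : (forall i, 0 < F i) ->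
  ln (\prod_i F i) = \sum_i ln (F i).
Proof.
move=> Fp.
suff : 0 < \prod_i F i /\ ln (\prod_i F i) = \sum_i ln (F i) by case.
apply: (big_rec2 (fun p s => 0 < p /\ ln p = s)).
  by rewrite ln1.
move=> i p s _ [p0 <-]; split; first by rewrite mulr_gt0.
by rewrite lnM // posrE.
Qed.

Lemma prob_ge (T : finType) (P : T -> R) (E : pred T) w :
  (forall w, 0 <= P w) -> E w -> P w <= prob P E.
Proof.
move=> P0 Ew; rewrite /prob (bigD1 w) //= lerDl.
by apply: sumr_ge0 => *; exact: P0.
Qed.

Lemma log2_2x (x : R) : 0 < x -> log2 (2 * x) = 1 + log2 x.
Proof.
move=> x0; rewrite /log2 lnM ?posrE // mulrDl divff //.
by apply/lt0r_neq0/ln_gt0; rewrite ltr1n.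
Qed.

Lemma ent_eq (T B C : finType) (P : T -> R) (f : T -> B) (g : T -> C) :
  (forall w, 0 <= P w) ->
  \sum_w P w * log2 (condProb P f g (f w) (g w)) = - condEnt P f g.
Proof.
move=> P0; rewrite /condEnt opprK.
transitivity (\sum_w \sum_b \sum_c (if (f w == b) && (g w == c) then
    P w * log2 (condProb P f g b c) else 0)).
  apply: eq_bigr => w _; rewrite (bigD1 (f w)) //= (bigD1 (g w)) //= !eqxx /=.
  rewrite big1 ?addr0; last by move=> c; rewrite eq_sym => /negbTE ->; rewrite ?andbF.
  rewrite big1 ?addr0 //; move=> b; rewrite eq_sym => /negbTE ->; exact: big1.
rewrite exchange_big. apply: eq_bigr => b _; rewrite exchange_big.
apply: eq_bigr => c _.
rewrite -(big_mkcond (fun w => (f w == b) && (g w == c)) (fun w => P w * _)).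
rewrite -mulr_suml /condProb /=.
rewrite -/(prob P (fun w => (f w == b) && (g w == c))).
case: eqP => // pc0.
suff -> : prob P (fun w => (f w == b) && (g w == c)) = 0 by rewrite !mul0r.
apply/eqP; rewrite eq_le; apply/andP; split; last by apply: sumr_ge0.
rewrite -pc0 /prob [X in _ <= X](bigID (fun w => f w == b)) /=.
rewrite (eq_bigl (fun w => (g w == c) && (f w == b))) ?lerDl.
  by apply: sumr_ge0 => *; exact: P0.
by move=> w; rewrite andbC.
Qed.
End Gen.

Section Main.
Variables (R : realType) (Y Z : finType) (qUX : 'F_2 * 'F_2 -> R)
  (W : 'F_2 -> Y * Z -> R) (n : nat) (beta : R).
Hypothesis qUX0 : forall ux, 0 <= qUX ux.
Hypothesis qUX1 : \sum_ux qUX ux = 1.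
Hypothesis W0 : forall x yz, 0 <= W x yz.
Hypothesis W1 : forall x, \sum_yz W x yz = 1.

Local Notation K := (2^n)%N.
Local Notation G := (polarG n).
Local Notation q := (@qK R Y Z qUX W n).
Local Notation pt := (@ptK R Y Z qUX W n beta).
Local Notation blkT := (blk (2^n) Y Z).

Definition Wp (w : blkT) := \prod_(i < K) W (bX w 0 i) (bY w i, bZ w i).
Definition qM (u x : 'rV['F_2]_K) := \prod_(i < K) qUX (u 0 i, x 0 i).

Lemma q_split w : q w = qM (bU w) (bX w) * Wp w.
Proof. by rewrite /qK big_split. Qed.

Lemma q0 w : 0 <= q w.
Proof. by apply: prodr_ge0 => i _; apply: mulr_ge0. Qed.

Lemma Wp0 w : 0 <= Wp w.
Proof. by apply: prodr_ge0. Qed.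

Lemma sum_blk (F : blkT -> R) :
  \sum_w F w = \sum_u \sum_x \sum_y \sum_z F (u, x, y, z).
Proof.
by rewrite sum_pair sum_pair sum_pair.
Qed.

Lemma sumWp (x : 'rV['F_2]_K) : \sum_(y : {ffun 'I_K -> Y}) \sum_(z : {ffun 'I_K -> Z})
   \prod_(i < K) W (x 0 i) (y i, z i) = 1.
Proof.
rewrite (sum2_ffun (fun i a b => W (x 0 i) (a, b))); apply: big1 => i _; by rewrite -(W1 (x 0 i)) sum_pair.
Qed.

Lemma q_sum : \sum_w q w = 1.
Proof.
rewrite sum_blk.
transitivity (\sum_u \sum_x qM u x).
  apply: eq_bigr => u _; apply: eq_bigr => x _.
  under eq_bigr do under eq_bigr do rewrite q_split.
  rewrite /Wp /bU /bX /bY /bZ /=.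
  rewrite -[RHS]mulr1 -[in RHS](sumWp x) [RHS]mulr_sumr.
  by apply: eq_bigr => y _; rewrite mulr_sumr.
rewrite /qM (sum2_row (fun i a b => qUX (a, b))); apply: big1 => i _; by rewrite -qUX1 sum_pair.
Qed.

Lemma q_marg u x : prob q (fun w => (bU w == u) && (bX w == x)) = qM u x.
Proof.
rewrite /prob big_mkcond /= sum_blk (bigD1 u) //= [X in _ + X]big1 ?addr0; last first.
  move=> u' /negbTE Hu; apply: big1 => x' _; apply: big1 => y _.
  by apply: big1 => z _; rewrite /bU /= Hu.
rewrite (bigD1 x) //= [X in _ + X]big1 ?addr0; last first.
  move=> x' /negbTE Hx; apply: big1 => y _.
  by apply: big1 => z _; rewrite /bU /bX /= Hx andbF.
rewrite /bU /bX /= !eqxx /=.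
under eq_bigr do under eq_bigr do rewrite q_split.
  rewrite /Wp /bU /bX /bY /bZ /=.
rewrite -[RHS]mulr1 -[in RHS](sumWp x) [RHS]mulr_sumr; apply: eq_bigr => y _.
by rewrite mulr_sumr.
Qed.


Lemma pref_S k (j : 'I_k) (b a : 'rV['F_2]_k) :
  (pref j.+1 b == pref j.+1 a) = (b 0 j == a 0 j) && (pref j b == pref j a).
Proof.
apply/eqP/andP => [H|[/eqP H1 /eqP H2]].
  split.
    by have := congr1 (fun f : {ffun 'I_k -> 'F_2} => f j) H; rewrite !ffunE ltnSn => ->.
  apply/eqP/ffunP => i; rewrite !ffunE; case: ifP => // lt.
  by have := congr1 (fun f : {ffun 'I_k -> 'F_2} => f i) H; rewrite !ffunE ltnS ltnW.
apply/ffunP => i; rewrite !ffunE ltnS leq_eqVlt; case: eqP => [/val_inj -> //|_] /=.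
case: ifP => // lt.
by have := congr1 (fun f : {ffun 'I_k -> 'F_2} => f i) H2; rewrite !ffunE lt.
Qed.

Lemma pref0 k (a b : 'rV['F_2]_k) : pref 0 a = pref 0 b.
Proof. by apply/ffunP => i; rewrite !ffunE. Qed.

Lemma prefK k (a b : 'rV['F_2]_k) : (pref k a == pref k b) = (a == b).
Proof.
apply/eqP/eqP => [H|->//]; apply/matrixP => i j; rewrite (ord1 i).
by have := congr1 (fun f : {ffun 'I_k -> 'F_2} => f j) H; rewrite !ffunE ltn_ord.
Qed.

Lemma mulG_eq (a b : 'rV['F_2]_K) : (a *m G == b *m G) = (a == b).
Proof.
apply/eqP/eqP => [H|->//].
by rewrite -(mulmx1 a) -(polarG_inv n) mulmxA H -mulmxA polarG_inv mulmx1.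
Qed.

Definition pA (j : nat) (a : 'rV['F_2]_K) :=
  prob q (fun w => pref j (bU w *m G) == pref j a).
Definition pV (j : nat) (v u : 'rV['F_2]_K) :=
  prob q (fun w => (pref j (bX w *m G), bU w) == (pref j v, u)).

Lemma condA_eq (j : 'I_K) a : pA j a != 0 ->
  condA qUX W j (a 0 j) a = pA j.+1 a / pA j a.
Proof.
move=> H; rewrite /condA /condProb /= -/(pA j a) (negbTE H); congr (_ / _).
by apply: eq_bigl => w; rewrite pref_S.
Qed.

Lemma condV_eq (j : 'I_K) v u : pV j v u != 0 ->
  condV qUX W j (v 0 j) v u = pV j.+1 v u / pV j v u.
Proof.
move=> H; rewrite /condV /condProb /= -/(pV j v u) (negbTE H); congr (_ / _).
by apply: eq_bigl => w; rewrite !xpair_eqE pref_S andbA.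
Qed.

Section Fixw.
Variable w : blkT.
Hypothesis qw : 0 < q w.
Let a := bU w *m G.
Let v := bX w *m G.
Let u := bU w.

Lemma pA_gt0 j : 0 < pA j a.
Proof. by apply: (lt_le_trans qw); apply: prob_ge => //; exact: q0. Qed.

Lemma pV_gt0 j : 0 < pV j v u.
Proof. by apply: (lt_le_trans qw); apply: prob_ge => //; exact: q0. Qed.

Lemma cA_gt0 (j : 'I_K) : 0 < condA qUX W j (a 0 j) a.
Proof. by rewrite condA_eq ?lt0r_neq0 ?pA_gt0 // divr_gt0 // pA_gt0. Qed.

Lemma cV_gt0 (j : 'I_K) : 0 < condV qUX W j (v 0 j) v u.
Proof. by rewrite condV_eq ?lt0r_neq0 ?pV_gt0 // divr_gt0 // pV_gt0. Qed.

Lemma K_gt0 : (0 < K)%N.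
Proof. by rewrite expn_gt0. Qed.

Lemma prodA : \prod_(j < K) condA qUX W j (a 0 j) a =
  prob q (fun w' => bU w' == u).
Proof.
under eq_bigr do rewrite condA_eq ?lt0r_neq0 ?pA_gt0 //.
rewrite -(big_mkord xpredT (fun j => pA j.+1 a / pA j a)).
rewrite telescope_prodf; last exact: K_gt0.
  have -> : pA 0 a = 1.
    by rewrite -q_sum /pA /prob; apply: eq_bigl => w'; rewrite (pref0 (bU w' *m G) a) eqxx.
  rewrite divr1 /pA /prob; apply: eq_bigl => w'.
  by rewrite prefK mulG_eq.
by move=> k _; rewrite lt0r_neq0 ?pA_gt0.
Qed.

Lemma prodV : \prod_(j < K) condV qUX W j (v 0 j) v u =
  qM (bU w) (bX w) / prob q (fun w' => bU w' == u).
Proof.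
under eq_bigr do rewrite condV_eq ?lt0r_neq0 ?pV_gt0 //.
rewrite -(big_mkord xpredT (fun j => pV j.+1 v u / pV j v u)).
rewrite telescope_prodf; last exact: K_gt0.
  congr (_ / _).
    rewrite -q_marg /pV /prob; apply: eq_bigl => w'.
    by rewrite xpair_eqE prefK mulG_eq andbC.
  by rewrite /pV /prob; apply: eq_bigl => w'; rewrite xpair_eqE (pref0 (bX w' *m G) v) eqxx.
by move=> k _; rewrite lt0r_neq0 ?pV_gt0.
Qed.

Lemma q_chain : q w = \prod_(j < K) condA qUX W j (a 0 j) a *
   \prod_(j < K) condV qUX W j (v 0 j) v u * Wp w.
Proof.
rewrite prodA prodV [X in _ = X * Wp w]mulrC divfK ?q_split //.
apply: lt0r_neq0; apply: (lt_le_trans qw); apply: prob_ge => //; exact: q0.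
Qed.

End Fixw.

Lemma ptK_eq w : pt w =
  ptA qUX W beta (bU w *m G) * ptV qUX W beta (bX w *m G) (bU w) * Wp w.
Proof.
rewrite /ptK (bigD1 (bU w *m G)) //= [X in _ + X]big1 ?addr0; last first.
  move=> a' Ha'; apply: big1 => v' _.
  rewrite (_ : (a' *m G == bU w) = false) //; apply/negbTE.
  by apply: contra Ha' => /eqP <-; rewrite -mulmxA polarG_inv mulmx1.
rewrite (bigD1 (bX w *m G)) //= [X in _ + X]big1 ?addr0; last first.
  move=> v' Hv'.
  rewrite (_ : (v' *m G == bX w) = false) ?andbF //; apply/negbTE.
  by apply: contra Hv' => /eqP <-; rewrite -mulmxA polarG_inv mulmx1.
by rewrite -!mulmxA polarG_inv !mulmx1 !eqxx.
Qed.

Lemma Wp_gt0 w : 0 < q w -> 0 < Wp w.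
Proof.
move=> qw; rewrite lt_neqAle Wp0 andbT; apply/eqP => H.
by move: qw; rewrite q_split -H mulr0 ltxx.
Qed.

Lemma pt_gt0 w : 0 < q w -> 0 < pt w.
Proof.
move=> qw; rewrite ptK_eq; apply: mulr_gt0; last exact: Wp_gt0.
apply: mulr_gt0; apply: prodr_gt0 => j _; case: ifP => _.
- by rewrite invr_gt0.
- exact: cA_gt0.
- by rewrite invr_gt0.
- exact: cV_gt0.
Qed.

Lemma log2_prod (I : finType) (F : I -> R) : (forall i, 0 < F i) ->
  log2 (\prod_i F i) = \sum_i log2 (F i).
Proof. by move=> H; rewrite /log2 ln_prod // mulr_suml. Qed.

Definition DA (j : 'I_K) (w : blkT) :=
  if VU qUX W beta j then
    1 + log2 (condA qUX W j ((bU w *m G) 0 j) (bU w *m G)) else 0.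
Definition DV (j : 'I_K) (w : blkT) :=
  if VXU qUX W beta j then
    1 + log2 (condV qUX W j ((bX w *m G) 0 j) (bX w *m G) (bU w)) else 0.

Lemma log2_1 : log2 (1 : R) = 0.
Proof. by rewrite /log2 ln1 mul0r. Qed.

Lemma logratio w : 0 < q w ->
  log2 (q w / pt w) = \sum_j DA j w + \sum_j DV j w.
Proof.
move=> qw; rewrite {1}(q_chain qw) ptK_eq /ptA /ptV.
set cA := fun j : 'I_K => condA qUX W j ((bU w *m G) 0 j) (bU w *m G).
set cV := fun j : 'I_K => condV qUX W j ((bX w *m G) 0 j) (bX w *m G) (bU w).
set pA' := fun j : 'I_K => if VU qUX W beta j then 2^-1 else cA j.
set pV' := fun j : 'I_K => if VXU qUX W beta j then 2^-1 else cV j.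
have cAp j : 0 < cA j by exact: cA_gt0.
have cVp j : 0 < cV j by exact: cV_gt0.
have pAp j : 0 < pA' j by rewrite /pA'; case: ifP; rewrite ?invr_gt0.
have pVp j : 0 < pV' j by rewrite /pV'; case: ifP; rewrite ?invr_gt0.
have -> : \prod_j cA j * \prod_j cV j * Wp w /
   (\prod_j pA' j * \prod_j pV' j * Wp w) =
   \prod_j (cA j / pA' j) * \prod_j (cV j / pV' j).
  rewrite !prodf_div; field.
  apply/and3P; split; apply: lt0r_neq0; last exact: Wp_gt0.
    by apply: prodr_gt0 => j _.
  by apply: prodr_gt0 => j _.
rewrite /log2 lnM ?posrE; last 2 first.
  by apply: prodr_gt0 => j _; rewrite divr_gt0.
  by apply: prodr_gt0 => j _; rewrite divr_gt0.
rewrite mulrDl -!/(log2 _) !log2_prod; last 2 first.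
  by move=> j; rewrite divr_gt0.
  by move=> j; rewrite divr_gt0.
congr (_ + _); apply: eq_bigr => j _; rewrite /DA /DV /pA' /pV'.
  case: ifP => _; last by rewrite divff ?log2_1 // lt0r_neq0.
  by rewrite invrK mulrC log2_2x.
case: ifP => _; last by rewrite divff ?log2_1 // lt0r_neq0.
by rewrite invrK mulrC log2_2x.
Qed.


Lemma sumDA (j : 'I_K) : \sum_w q w * DA j w =
  if VU qUX W beta j then 1 - HA qUX W j else 0.
Proof.
rewrite /DA; case: ifP => _; last by rewrite big1 // => w _; rewrite mulr0.
under eq_bigr do rewrite mulrDr mulr1.
rewrite big_split /= q_sum.
have -> : \sum_w q w * log2 (condA qUX W j ((bU w *m G) 0 j) (bU w *m G))
   = - HA qUX W j.
  exact: (ent_eq (fun w => (bU w *m G) 0 j) (fun w => pref j (bU w *m G)) q0).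
by [].
Qed.

Lemma sumDV (j : 'I_K) : \sum_w q w * DV j w =
  if VXU qUX W beta j then 1 - HV qUX W j else 0.
Proof.
rewrite /DV; case: ifP => _; last by rewrite big1 // => w _; rewrite mulr0.
under eq_bigr do rewrite mulrDr mulr1.
rewrite big_split /= q_sum.
have -> : \sum_w q w *
    log2 (condV qUX W j ((bX w *m G) 0 j) (bX w *m G) (bU w))
   = - HV qUX W j.
  exact: (ent_eq (fun w => (bX w *m G) 0 j)
            (fun w => (pref j (bX w *m G), bU w)) q0).
by [].
Qed.

Lemma delta_ge0 : 0 <= @deltaK R n beta.
Proof. by rewrite /deltaK powR_ge0. Qed.

Lemma KLK_le : \sum_w q w * log2 (q w / pt w) <= 2 * K%:R * @deltaK R n beta.
Proof.
have -> : \sum_w q w * log2 (q w / pt w) = \sum_w (\sum_j q w * DA j w + \sum_j q w * DV j w).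
  apply: eq_bigr => w _.
  have := q0 w; rewrite le_eqVlt => /orP [/eqP <-|qw].
    by rewrite !mul0r !big1 ?addr0 // => j _; rewrite mul0r.
  by rewrite logratio // mulrDr !mulr_sumr.
rewrite big_split /= exchange_big [X in _ + X <= _]exchange_big /=.
under eq_bigr do rewrite sumDA.
under [X in _ + X <= _]eq_bigr do rewrite sumDV.
have H : forall (P : pred 'I_K) (H : 'I_K -> R),
    (forall j, P j -> 1 - @deltaK R n beta < H j) ->
    \sum_j (if P j then 1 - H j else 0) <= K%:R * @deltaK R n beta.
  move=> P H HP.
  have -> : K%:R * @deltaK R n beta = \sum_(j < K) @deltaK R n beta.
    by rewrite sumr_const card_ord mulr_natl.
  apply: ler_sum => j _; case: ifP => Pj; last exact: delta_ge0.
  by have := HP j Pj; lra.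
have -> : 2 * K%:R * @deltaK R n beta =
   K%:R * @deltaK R n beta + K%:R * @deltaK R n beta by ring.
by apply: lerD; apply: H.
Qed.

End Main.

Theorem lemma2 (R : realType) (Y Z : finType) (S : Type)
    (qUX : 'F_2 * 'F_2 -> R) (W : S -> 'F_2 -> Y * Z -> R) (s : S)
    (n L : nat) (beta : R) :
  (forall ux, 0 <= qUX ux) -> \sum_(ux : 'F_2 * 'F_2) qUX ux = 1 ->
  (forall s' x yz, 0 <= W s' x yz) ->
  (forall s' x, \sum_(yz : Y * Z) W s' x yz = 1) ->
  0 < beta < 2^-1 ->
  (KL (@qN R Y Z qUX (W s) n L) (@ptN R Y Z qUX (W s) n beta L)
     <= (2 * L%:R * (2 ^ n)%:R * @deltaK R n beta)%:E)%E.
Proof.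
move=> qUX0 qUX1 W0' W1' _.
have W0 := W0' s; have W1 := W1' s.
set qk := @qK R Y Z qUX (W s) n.
set pk := @ptK R Y Z qUX (W s) n beta.
have qk0 : forall b, 0 <= qk b by move=> b; apply: q0.
have pk0 : forall b, 0 < qk b -> 0 < pk b by move=> b qb; apply: pt_gt0.
have ql : forall w : {ffun 'I_L -> blk (2 ^ n) Y Z},
    0 < @qN R Y Z qUX (W s) n L w -> forall l, 0 < qk (w l).
  move=> w qp l; rewrite lt_neqAle qk0 andbT; apply/eqP => H.
  by move: qp; rewrite /qN (bigD1 l) //= -/qk -H mul0r ltxx.
rewrite /KL.
have -> : [exists w, (0 < @qN R Y Z qUX (W s) n L w) && (@ptN R Y Z qUX (W s) n beta L w == 0)]
    = false.
  apply: negbTE; apply/existsPn => w; apply/negP => /andP [qp /eqP].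
  apply/eqP; apply: lt0r_neq0; apply: prodr_gt0 => l _.
  by apply: pk0; apply: ql.
rewrite lee_fin.
set D := fun b => log2 (qk b / pk b).
have E1 : forall w : {ffun 'I_L -> blk (2 ^ n) Y Z},
  @qN R Y Z qUX (W s) n L w * log2 (@qN R Y Z qUX (W s) n L w / @ptN R Y Z qUX (W s) n beta L w)
  = \sum_l \prod_l' (if l' == l then qk (w l') * D (w l') else qk (w l')).
  move=> w.
  have -> : @qN R Y Z qUX (W s) n L w * log2 (@qN R Y Z qUX (W s) n L w / @ptN R Y Z qUX (W s) n beta L w)
      = \sum_l @qN R Y Z qUX (W s) n L w * D (w l).
    have : 0 <= @qN R Y Z qUX (W s) n L w by apply: prodr_ge0 => l _; exact: qk0.
    rewrite le_eqVlt => /orP [/eqP <-|qp].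
      by rewrite mul0r big1 // => l _; rewrite mul0r.
    rewrite -mulr_sumr /qN /ptN -prodf_div log2_prod //.
    by move=> l; rewrite divr_gt0 //; [apply: ql | apply: pk0; apply: ql].
  apply: eq_bigr => l _; rewrite /qN (bigD1 l) //= [RHS](bigD1 l) //= eqxx.
  rewrite -/qk mulrAC; congr (_ * _); apply: eq_bigr => l' /negbTE -> //.
rewrite (eq_bigr _ (fun w _ => E1 w)) exchange_big /=.
have E2 : forall l : 'I_L,
   \sum_(w : {ffun 'I_L -> blk (2 ^ n) Y Z})
      \prod_l' (if l' == l then qk (w l') * D (w l') else qk (w l'))
   = \sum_b qk b * log2 (qk b / pk b).
  move=> l.
  rewrite (sum_ffun_prod (fun l' b => if l' == l then qk b * D b else qk b)).
  rewrite (bigD1 l) //= eqxx [X in _ * X]big1 ?mulr1 // => l' /negbTE ->.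
  by apply: q_sum.
rewrite (eq_bigr _ (fun l _ => E2 l)) sumr_const card_ord.
have -> : 2 * L%:R * (2 ^ n)%:R * @deltaK R n beta =
   (2 * (2 ^ n)%:R * @deltaK R n beta) *+ L by rewrite -[RHS]mulr_natl; ring.
rewrite lerMn2r; apply/orP; right.
by apply: KLK_le.
Qed.
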